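(* Let $S$ be a spray, $v\in\mathcal TM$ with $C_v\notin\mathcal H_v$. Let $g_1=\{B\in T^*_v(TM): B(C_v)=0,\ B|_{\mathcal H_v}=0\}$ and $g_2=\{B\in S^2T^*_v(TM): B(X,C_v)=0 \text{ and } B(X,Y)=0 \text{ for all } X\in T_v(TM),\ Y\in\mathcal H_v\}$ (the kernels of the symbol of $P^2_F=(\mathcal L_CE-2E,\ P_{\mathfrak h}E)$ and of its first prolongation). Then the symbol of $P^2_F$ is involutive at $v$: there is a basis $e_1,\dots,e_{2n}$ of $T_v(TM)$ such that $\dim g_2=\dim g_1+\sum_{j=1}^{2n}\dim\{B\in g_1: B(e_1)=\dots=B(e_j)=0\}$.
   Context: Let $M$ be a smooth $n$-manifold, $\mathcal{T}M=TM\setminus\{0\}$, $(x^i,y^i)$ induced coordinates on $TM$. A spray is $S=y^i\frac{\partial}{\partial x^i}+f^i(x,y)\frac{\partial}{\partial y^i}$ on $\mathcal TM$ with $f^i$ positively homogeneous of degree 2 in $y$. Put $\Gamma^i_j=-\frac12\frac{\partial f^i}{\partial y^j}$; horizontal vector fields are spanned by $h_i=\frac{\partial}{\partial x^i}-\Gamma^\alpha_i\frac{\partial}{\partial y^\alpha}$. $C=y^i\frac{\partial}{\partial y^i}$. The holonomy distribution $\mathcal H$ has fibre $\mathcal H_u$ spanned by the values at $u$ of all local horizontal vector fields and all their iterated Lie brackets. $\mathfrak h$ is a projection of $T(TM)$ onto $\mathcal H$ and $P_{\mathfrak h}E$ is the 1-form $X\mapsto(\mathfrak hX)(E)$. *)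

(* Defs.v *)
(* T_v(TM) is modelled as 'rV[R]_m (m = 2n) with a fixed basis;
   subspaces (e.g. the fibre H_v of the holonomy distribution) are represented
   mxalgebra-style by square matrices whose row space is the subspace.
   Covectors B in T*_v(TM) are row vectors b, with B(X) = X *m b^T.
   Bilinear forms B on T_v(TM) are matrices, with B(X,Y) = X *m B *m Y^T. *)
From mathcomp Require Import all_boot all_order all_algebra.
Set Implicit Arguments. Unset Strict Implicit. Unset Printing Implicit Defensive.
Import GRing.Theory.
Local Open Scope ring_scope.

Section Symbols.
Variables (R : fieldType) (m : nat).

Definition g1 (C : 'rV[R]_m) (H : 'M[R]_m) : 'M[R]_m :=
  kermx (col_mx C H)^T.

(* { B in g1 : B(e_1) = ... = B(e_j) = 0 }, e_i = i-th row of E (1-based) *)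
Definition first_rows (E : 'M[R]_m) (j : nat) : 'M[R]_m :=
  \matrix_(i < m) (if (i < j)%N then row i E else 0).

Definition g1_vanish (C : 'rV[R]_m) (H : 'M[R]_m) (E : 'M[R]_m) (j : nat)
  : 'M[R]_m :=
  kermx (col_mx C (col_mx H (first_rows E j)))^T.

(* Linear constraints defining g2 on a bilinear form B:
   symmetry (B - B^T = 0), B(X,C) = 0 and B(X,Y) = 0 for Y in H, all X. *)
Definition g2_constr (C : 'rV[R]_m) (H : 'M[R]_m) (B : 'M[R]_m)
  : 'M[R]_(m, m + (1 + m)) :=
  row_mx (B - B^T) (B *m (col_mx C H)^T).

(* g2, as a subspace of 'rV_(m*m) via the mxvec encoding of bilinear forms *)
Definition g2 (C : 'rV[R]_m) (H : 'M[R]_m) : 'M[R]_(m * m) :=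
  kermx (lin_mx (g2_constr C H)).

End Symbols.

(* Main.v *)
From HB Require Import structures.
Require Import Defs.
From mathcomp Require Import all_boot all_order all_algebra.
From mathcomp Require Import all_classical all_reals.
From mathcomp Require Import zify ring.
Import GRing.Theory.
Definition tri k := \sum_(i < k) i.+1.

Lemma sum_ge (a m : nat) : \sum_(b < m) (a <= b : nat) = m - a.
Proof.
elim: m => [|m IH]; first by rewrite big_ord0.
rewrite big_ord_recr /= IH; case: (leqP a m) => h /=; lia.
Qed.

Lemma sumA (r m : nat) :
  \sum_(a < m) \sum_(b < m) ((r <= a) && (a <= b) : nat) = tri (m - r).
Proof.
have e1 : forall a : 'I_m, \sum_(b < m) ((r <= a) && (a <= b) : nat)
   = (r <= a) * (m - a).
  move=> a; case: (leqP r a) => h /=.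
    by rewrite mul1n -sum_ge.
  by rewrite mul0n big1.
rewrite (eq_bigr _ (fun a _ => e1 a)) {e1}.
elim: m => [|m IH]; first by rewrite big_ord0 /tri sub0n big_ord0.
rewrite big_ord_recr /=.
have -> : \sum_(i < m) (r <= widen_ord (leqnSn m) i) * (m.+1 - widen_ord (leqnSn m) i)
   = \sum_(i < m) (r <= i) * (m - i) + \sum_(i < m) (r <= i : nat).
  rewrite -big_split /=; apply: eq_bigr => i _.
  have := ltn_ord i; case: (leqP r i) => /= h1 h2; lia.
rewrite IH.
have -> : \sum_(i < m) (r <= i : nat) = m - r.
  by rewrite -sum_ge.
case: (leqP r m) => h /=.
  have -> : m.+1 - r = (m - r).+1 by lia.
  rewrite /tri big_ord_recr /=; lia.
have -> : m.+1 - r = 0 by lia.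
have -> : m - r = 0 by lia.
by rewrite /tri big_ord0.
Qed.

Lemma sumB_aux k : k + \sum_(j < k) (k - j.+1) = tri k.
Proof.
elim: k => [|k IH]; first by rewrite big_ord0 /tri big_ord0.
rewrite big_ord_recl /tri big_ord_recr /=.
have -> : \sum_(i < k) (k.+1 - (bump 0 i).+1) = \sum_(i < k) (k - i.+1).
  by apply: eq_bigr => i _; rewrite /bump /=; lia.
rewrite -/(tri k) -IH; lia.
Qed.

Lemma sumB (k m : nat) : k <= m ->
  k + \sum_(j < m) (k - minn j.+1 k) = tri k.
Proof.
move=> km; rewrite -sumB_aux.
have -> : \sum_(j < m) (k - minn j.+1 k) = \sum_(j < m) (k - j.+1).
  by apply: eq_bigr => j _; lia.
congr (_ + _).
move: km; rewrite leq_eqVlt => /orP[/eqP -> //|].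
elim: m => [//|m IH]; rewrite ltnS leq_eqVlt => /orP[/eqP ->|h].
  by rewrite big_ord_recr /=; lia.
  rewrite big_ord_recr /= (_ : k - m.+1 = 0); last lia. by rewrite addn0; exact: IH.
Qed.

Local Open Scope ring_scope.

Section G1.
Variables (R : fieldType) (m : nat) (C : 'rV[R]_m) (H : 'M[R]_m).
Let W := col_mx C H.
Let r := \rank W.

Lemma rank_g1 : \rank (g1 C H) = (m - r)%N.
Proof. by rewrite /g1 mxrank_ker mxrank_tr. Qed.

Lemma first_rowsE (E : 'M[R]_m) j : first_rows E j = pid_mx j *m E.
Proof.
apply/row_matrixP => i; rewrite row_mul /first_rows rowK.
case: ifP => h.
  suff -> : row i (pid_mx j : 'M[R]_m) = row i 1%:M by rewrite -row_mul mul1mx.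
  by apply/rowP => l; rewrite !mxE h andbT.
suff -> : row i (pid_mx j : 'M[R]_m) = 0 by rewrite mul0mx.
by apply/rowP => l; rewrite !mxE h andbF.
Qed.

Lemma rank_vanish_sum (E : 'M[R]_m) j :
  \rank (g1_vanish C H E j) = (m - \rank (W + first_rows E j)%MS)%N.
Proof.
rewrite /g1_vanish mxrank_ker mxrank_tr; congr (_ - _)%N.
rewrite -addsmxE -(adds_eqmx (eqmx_refl C) (addsmxE H _)) addsmxA.
by rewrite (adds_eqmx (addsmxE C H) (eqmx_refl _)).
Qed.

Let E := row_ebase (W^C)%MS.

Lemma rank_vanish j : \rank (g1_vanish C H E j) = ((m - r) - minn j (m - r))%N.
Proof.
rewrite rank_vanish_sum first_rowsE.
have Efree : row_free E by rewrite row_free_unit row_ebase_unit.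
have rc : \rank (W^C)%MS = (m - r)%N by rewrite mxrank_compl.
have rW : (r <= m)%N by apply: rank_leq_col.
case: (leqP j (m - r)) => hj.
  have sub : ((pid_mx j : 'M[R]_m) *m E <= W^C)%MS.
    rewrite -(eq_row_base (W^C)%MS).
    rewrite /row_base -/E.
    have -> : (pid_mx j : 'M[R]_m) =
       (pid_mx j : 'M[R]_(m, \rank (W^C)%MS)) *m pid_mx (\rank (W^C)%MS).
      by rewrite mul_pid_mx rc; congr pid_mx; lia.
    by rewrite -mulmxA submxMl.
  rewrite mxrank_disjoint_sum.
    have jm : (j <= m)%N by apply: leq_trans hj (leq_subr _ _).
    rewrite mxrankMfree // rank_pid_mx //; rewrite -/r; lia.
  apply/eqP; rewrite -submx0 -(capmx_compl W).
  by rewrite capmxS.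
have full : (\rank (W + (pid_mx j : 'M[R]_m) *m E)%MS = m)%N.
  apply/eqP; rewrite eqn_leq rank_leq_col /=.
  have := addsmx_compl_full W; rewrite /row_full => /eqP hf.
  apply: (@leq_trans (\rank (W + W^C)%MS)); first by rewrite hf.
  apply: mxrankS; apply: addsmxS => //.
  rewrite -(eq_row_base (W^C)%MS).
  rewrite /row_base -/E.
  have -> : (pid_mx (\rank (W^C)%MS) : 'M[R]_(\rank (W^C)%MS, m)) =
       (pid_mx (\rank (W^C)%MS) : 'M[R]_(\rank (W^C)%MS, m)) *m pid_mx j.
    by rewrite mul_pid_mx rc; congr pid_mx; lia.
  by rewrite -mulmxA submxMl.
rewrite full; lia.
Qed.

End G1.

Lemma mul_rV_lin' (R : fieldType) a b c d (f : 'M[R]_(a,b) -> 'M[R]_(c,d))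
  (fl : linear f) u : u *m lin_mx f = mxvec (f (vec_mx u)).
Proof.
pose g : {linear 'M[R]_(a,b) -> 'M[R]_(c,d)} :=
  HB.pack f (GRing.isLinear.Build _ _ _ _ f fl).
exact: (mul_rV_lin g u).
Qed.
Arguments mul_rV_lin' {R a b c d f} fl u.

Lemma mul_pid_entry (R : fieldType) p m r (X : 'M[R]_(p, m)) a b :
  (X *m (pid_mx r : 'M[R]_m)) a b = if (b < r)%N then X a b else 0.
Proof.
rewrite !mxE (bigD1 b) //= big1 ?addr0 => [|t /negbTE ne]; last first.
  by rewrite !mxE val_eqE ne /= mulr0.
by rewrite !mxE eqxx /=; case: ifP => _; rewrite ?mulr1 ?mulr0.
Qed.

Section G2.
Variables (R : fieldType) (m : nat) (C : 'rV[R]_m) (H : 'M[R]_m).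
Let W := col_mx C H.
Let r := \rank W.
Let P := row_ebase W.
Let Pu : P \in unitmx. Proof. exact: row_ebase_unit. Qed.

Definition Phi (B : 'M[R]_m) := P *m B *m P^T.
Definition Gam (B : 'M[R]_m) : 'M[R]_m :=
  \matrix_(a, b) if (a <= b)%N then B a b else B a b - B b a.
Definition Gam' (B : 'M[R]_m) : 'M[R]_m :=
  \matrix_(a, b) if (a <= b)%N then B a b else B a b + B b a.
Definition Gf B := Gam (Phi B).
Definition Gf' V := invmx P *m Gam' V *m (invmx P)^T.
Definition chi (B : 'M[R]_m) : 'M[R]_m :=
  \matrix_(a, b) if (r <= a)%N && (a <= b)%N then 0 else B a b.

Lemma Phi_lin : linear Phi.
Proof.
by move=> k u v; rewrite /Phi mulmxDr mulmxDl -scalemxAr -scalemxAl.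
Qed.

Lemma Gam_lin : linear Gam.
Proof.
move=> k u v; apply/matrixP => a b; rewrite !mxE.
by case: ifP => _; rewrite ?mxE; ring.
Qed.

Lemma Gf_lin : linear Gf.
Proof. by move=> k u v; rewrite /Gf Phi_lin Gam_lin. Qed.

Lemma Gf'_lin : linear Gf'.
Proof.
move=> k u v; rewrite /Gf' /Gam'.
have -> : (\matrix_(a, b) (if (a <= b)%N then (k *: u + v) a b
    else (k *: u + v) a b + (k *: u + v) b a) : 'M[R]_m) =
  k *: Gam' u + Gam' v.
  by apply/matrixP => a b; rewrite !mxE; case: ifP => _; rewrite ?mxE; ring.
by rewrite mulmxDr mulmxDl -scalemxAr -scalemxAl.
Qed.

Lemma chi_lin : linear chi.
Proof.
move=> k u v; apply/matrixP => a b; rewrite !mxE.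
by case: ifP => _; rewrite ?mxE; ring.
Qed.

Lemma g2c_lin : linear (g2_constr C H).
Proof.
move=> k u v; rewrite /g2_constr scale_row_mx add_row_mx.
congr row_mx; last by rewrite mulmxDl -scalemxAl.
by rewrite linearD linearZ /= scalerBr opprD addrACA.
Qed.

Lemma GfK B : Gf' (Gf B) = B.
Proof.
rewrite /Gf' /Gf.
have -> : Gam' (Gam (Phi B)) = Phi B.
  apply/matrixP => a b; rewrite !mxE; case: leqP => h //.
  rewrite ?mxE ltnW //=; ring.
by rewrite /Phi -!mulmxA mulKmx // -trmx_mul mulVmx // trmx1 mulmx1.
Qed.

Lemma Gf'K V : Gf (Gf' V) = V.
Proof.
rewrite /Gf' /Gf.
have -> : Phi (invmx P *m Gam' V *m (invmx P)^T) = Gam' V.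
  rewrite /Phi -!mulmxA mulKVmx // -trmx_mul mulmxV //.
  by rewrite trmx1 mulmx1.
apply/matrixP => a b; rewrite !mxE; case: leqP => h //.
rewrite ?mxE ltnW //=; ring.
Qed.

Lemma PhiK B : invmx P *m Phi B *m (invmx P)^T = B.
Proof. by rewrite /Phi -!mulmxA mulKmx // -trmx_mul mulVmx // trmx1 mulmx1. Qed.

Lemma Phi_inj : injective Phi.
Proof. exact: (@can_inj _ _ Phi (fun V => invmx P *m V *m (invmx P)^T) PhiK). Qed.

Lemma Phi_tr B : (Phi B)^T = Phi B^T.
Proof. by rewrite /Phi !trmx_mul trmxK mulmxA. Qed.

Lemma sym_eq B : (B - B^T == 0) = (Phi B == (Phi B)^T).
Proof. by rewrite subr_eq0 Phi_tr (inj_eq Phi_inj). Qed.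

Lemma col_eq B : (B *m W^T == 0) = (Phi B *m (pid_mx r : 'M[R]_m) == 0).
Proof.
rewrite -[LHS]trmx_eq0 trmx_mul trmxK -[LHS]sub_kermx -(eq_row_base W) sub_kermx.
rewrite /row_base -/r -/P -trmx_eq0 !trmx_mul trmxK tr_pid_mx mulmxA.
have rm : (r <= m)%N by apply: rank_leq_col.
apply/idP/idP => /eqP h; apply/eqP.
  have -> : (pid_mx r : 'M[R]_m) =
      (pid_mx r : 'M[R]_(m, r)) *m (pid_mx r : 'M[R]_(r, m)).
    by rewrite mul_pid_mx; congr pid_mx; lia.
  rewrite /Phi -[P *m B *m P^T *m _]/(P *m B *m P^T *m (pid_mx r *m pid_mx r)).
  by rewrite !mulmxA -(mulmxA P B) -(mulmxA P) h mulmx0 mul0mx.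
have -> : (pid_mx r : 'M[R]_(m, r)) =
    (pid_mx r : 'M[R]_m) *m (pid_mx r : 'M[R]_(m, r)).
  by rewrite mul_pid_mx; congr pid_mx; lia.
have -> : B *m P^T = invmx P *m (Phi B).
  by rewrite /Phi -!mulmxA mulKmx.
by rewrite mulmxA -(mulmxA (invmx P)) h mulmx0 mul0mx.
Qed.

Lemma elem_eq (X : 'M[R]_m) :
  ((X == X^T) && (X *m (pid_mx r : 'M[R]_m) == 0)) = (chi (Gam X) == 0).
Proof.
apply/idP/idP.
  move=> /andP[/eqP sy /eqP cz].
  have symE a b : X a b = X b a.
    by move: (congr1 (fun M : 'M[R]_m => M a b) sy); rewrite mxE.
  have czE (a b : 'I_m) : (b < r)%N -> X a b = 0.
    by move=> h; move: (congr1 (fun M : 'M[R]_m => M a b) cz);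
      rewrite mul_pid_entry h mxE.
  apply/eqP/matrixP => a b; rewrite !mxE.
  case: ifP => // hT; case: leqP => hab.
    rewrite symE czE //.
    by move: hT; rewrite hab andbT => /negbT; rewrite -ltnNge.
  by rewrite symE subrr.
move/eqP/matrixP => hz.
have hz' (a b : 'I_m) : ~~ ((r <= a)%N && (a <= b)%N) -> Gam X a b = 0.
  by move=> h; move: (hz a b); rewrite !mxE (negbTE h).
have symE a b : X a b = X b a.
  case: (ltngtP a b) => h.
  - have := hz' b a; rewrite !mxE (leqNgt b a) h /= andbF => /(_ isT) /eqP.
    by rewrite subr_eq0 => /eqP.
  - have := hz' a b; rewrite !mxE (leqNgt a b) h /= andbF => /(_ isT) /eqP.
    by rewrite subr_eq0 => /eqP.
  - by rewrite (val_inj h).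
apply/andP; split.
  by apply/eqP/matrixP => a b; rewrite mxE.
apply/eqP/matrixP => a b; rewrite mul_pid_entry mxE.
case: ifP => // hb; case: (leqP a b) => hab.
  have := hz' a b; rewrite !mxE hab; apply.
  by rewrite negb_and -ltnNge (leq_ltn_trans hab hb).
rewrite symE; have := hz' b a; rewrite !mxE (ltnW hab); apply.
by rewrite negb_and -ltnNge hb.
Qed.

Lemma key B : (g2_constr C H B == 0) = (chi (Gf B) == 0).
Proof.
by rewrite /g2_constr row_mx_eq0 sym_eq col_eq elem_eq.
Qed.

Definition Tp (p : 'I_m * 'I_m) := (r <= p.1)%N && (p.1 <= p.2)%N.

Lemma rank_kerD :
  \rank (kermx (lin_mx chi)) = (\sum_(p | Tp p) 1)%N.
Proof.
set S := (\sum_(p | Tp p) <<delta_mx 0 (mxvec_index p.1 p.2) : 'rV[R]_(m * m)>>)%MS.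
have inj : {in Tp &, injective (fun p : 'I_m * 'I_m => mxvec_index p.1 p.2)}.
  move=> [a b] [c d] _ _; rewrite /mxvec_index /= => /cast_ord_inj/enum_rank_inj.
  by [].
have rS : \rank S = (\sum_(p | Tp p) 1)%N.
  move/mxdirectP: (@mxdirect_delta R _ Tp (m * m) _ inj) => /= ->.
  by apply: eq_bigr => p _; rewrite mxrank_gen mxrank_delta.
rewrite -rS; apply/eqP; rewrite eqn_leq; apply/andP; split; apply: mxrankS.
  apply/row_subP => i; set u := row i _.
  have /sub_kermxP hu : (u <= kermx (lin_mx chi))%MS by apply: row_sub.
  rewrite (mul_rV_lin' chi_lin) in hu.
  move/eqP: hu; rewrite mxvec_eq0 => /eqP hu.
  rewrite -(vec_mxK u) (matrix_sum_delta (vec_mx u)) linear_sum /=.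
  apply: summx_sub => a _; rewrite linear_sum /=.
  apply: summx_sub => b _; rewrite linearZ /= mxvec_delta.
  case hT: (Tp (a, b)).
    apply: scalemx_sub; apply: (sumsmx_sup (a, b)) => //.
    by rewrite genmxE.
  have : chi (vec_mx u) a b = 0 by rewrite hu mxE.
  by rewrite mxE; move: hT; rewrite /Tp /= => -> ->; rewrite scale0r sub0mx.
apply/sumsmx_subP => p Tpp; rewrite genmxE sub_kermx (mul_rV_lin' chi_lin).
rewrite -mxvec_delta mxvecK mxvec_eq0; apply/eqP/matrixP => a b; rewrite !mxE.
case: ifP => // hT; case: (a =P p.1) => [ea|]; case: (b =P p.2) => [eb|] //=.
by move: Tpp hT; rewrite /Tp ea eb => ->.
Qed.

Lemma LL' : lin_mx Gf *m lin_mx Gf' = 1%:M.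
Proof.
apply/row_matrixP => i.
rewrite !rowE mulmx1 mulmxA (mul_rV_lin' Gf_lin) (mul_rV_lin' Gf'_lin).
by rewrite mxvecK GfK vec_mxK.
Qed.

Lemma rank_g2_ker : \rank (g2 C H) = \rank (kermx (lin_mx chi)).
Proof.
set K := g2 C H; set K' := kermx (lin_mx chi).
set L := lin_mx Gf; set L' := lin_mx Gf'.
have L'L : L' *m L = 1%:M by apply: mulmx1C; apply: LL'.
have s1 : (K *m L <= K')%MS.
  apply/row_subP => i; rewrite row_mul sub_kermx (mul_rV_lin' chi_lin).
  rewrite (mul_rV_lin' Gf_lin) mxvecK mxvec_eq0 -key.
  have /sub_kermxP : (row i K <= K)%MS by apply: row_sub.
  by rewrite (mul_rV_lin' g2c_lin) => /eqP; rewrite mxvec_eq0.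
have s2 : (K' *m L' <= K)%MS.
  apply/row_subP => i; rewrite row_mul sub_kermx (mul_rV_lin' g2c_lin).
  rewrite (mul_rV_lin' Gf'_lin) mxvecK mxvec_eq0 key Gf'K.
  have /sub_kermxP : (row i K' <= K')%MS by apply: row_sub.
  by rewrite (mul_rV_lin' chi_lin) => /eqP; rewrite mxvec_eq0.
apply/eqP; rewrite eqn_leq; apply/andP; split.
  apply: leq_trans (mxrankS s1).
  by rewrite -{1}(mulmx1 K) -LL' mulmxA mxrankM_maxl.
apply: leq_trans (mxrankS s2).
by rewrite -{1}(mulmx1 K') -L'L mulmxA mxrankM_maxl.
Qed.

End G2.

Lemma count_T (m r : nat) :
  (\sum_(p : 'I_m * 'I_m | (r <= p.1)%N && (p.1 <= p.2)%N) 1)%N =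
  (\sum_(a < m) \sum_(b < m) ((r <= a)%N && (a <= b)%N : nat))%N.
Proof.
rewrite pair_bigA /= big_mkcond /=; apply: eq_bigr => p _.
by case: ifP.
Qed.

Theorem mainTheorem5 (R : realType) (n : nat)
  (H : 'M[R]_(2 * n)) (C : 'rV[R]_(2 * n))
  (hC : ~~ (C <= H)%MS) :
  exists E : 'M[R]_(2 * n),
    E \in unitmx /\
    \rank (g2 C H) =
      (\rank (g1 C H) + \sum_(j < 2 * n) \rank (g1_vanish C H E j.+1))%N.
Proof.
exists (row_ebase ((col_mx C H)^C)%MS); split; first exact: row_ebase_unit.
rewrite rank_g2_ker rank_kerD count_T sumA rank_g1.
under eq_bigr do rewrite rank_vanish.
by rewrite sumB // leq_subr.
Qed.
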